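(* Let $c_0,c_1$ be real constants with $c_0\ge\max\{c_1,-3c_1\}$, let $M\ge2$, and let $\{v_j\}_{j=0}^{M}$ be any real sequence. Put $$A=\frac12\sqrt{\frac{c_0-c_1}{2}}+\frac12\sqrt{\frac{c_0+3c_1}{2}},\qquad B=\sqrt{\frac{c_0-c_1}{2}},\qquad E_j=A^2v_j^2+\left(Bv_j-Av_{j-1}\right)^2,\ j=1,\dots,M.$$ Then for every $j=1,\dots,M-1$, $$v_{j+1}\left(c_0v_{j+1}-(c_0-c_1)v_j-c_1v_{j-1}\right)\ge E_{j+1}-E_j.$$ *)

(* Defs.v *)
From Stdlib Require Import Reals Lra.
Open Scope R_scope.

Definition coefA (c0 c1 : R) : R :=
  / 2 * sqrt ((c0 - c1) / 2) + / 2 * sqrt ((c0 + 3 * c1) / 2).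

Definition coefB (c0 c1 : R) : R := sqrt ((c0 - c1) / 2).

(* E_j = A^2 v_j^2 + (B v_j - A v_{j-1})^2, meaningful for j >= 1 *)
Definition Eseq (c0 c1 : R) (v : nat -> R) (j : nat) : R :=
  (coefA c0 c1)^2 * (v j)^2 + (coefB c0 c1 * v j - coefA c0 c1 * v (j - 1)%nat)^2.

(* Main.v *)
Require Import Defs.
From Stdlib Require Import Reals Lra Lia.
Open Scope R_scope.

Theorem lemma4 (c0 c1 : R) (M : nat) (v : nat -> R)
  (Hc0 : c0 >= Rmax c1 (-3 * c1)) (HM : (2 <= M)%nat) :
  forall j : nat, (1 <= j)%nat -> (j <= M - 1)%nat ->
    v (S j) * (c0 * v (S j) - (c0 - c1) * v j - c1 * v (j - 1)%nat)
      >= Eseq c0 c1 v (S j) - Eseq c0 c1 v j.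
Proof.
  intros j Hj _.
  assert (H1 : c1 <= Rmax c1 (-3*c1)) by apply Rmax_l.
  assert (H2 : -3*c1 <= Rmax c1 (-3*c1)) by apply Rmax_r.
  unfold Eseq, coefA, coefB.
  replace (S j - 1)%nat with j by lia.
  set (a := sqrt ((c0 - c1) / 2)).
  set (b := sqrt ((c0 + 3 * c1) / 2)).
  assert (Ha : a * a = (c0 - c1) / 2) by (apply sqrt_sqrt; lra).
  assert (Hb : b * b = (c0 + 3 * c1) / 2) by (apply sqrt_sqrt; lra).
  set (x := v (S j)). set (y := v j). set (z := v (j - 1)%nat).
  assert (Ec0 : c0 = (3*(a*a) + b*b)/2) by lra.
  assert (Ec1 : c1 = (b*b - a*a)/2) by lra.
  rewrite Ec0, Ec1.
  match goal with |- ?L >= ?R => assert (E : L - R = ((a-b)/2*x - a*y + (a+b)/2*z)^2) by field end.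
  pose proof (pow2_ge_0 ((a-b)/2*x - a*y + (a+b)/2*z)). lra.
Qed.
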